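(* Let $B$ be a nonzero real constant and let $(x_n)_{n\ge0}$ be a (well-defined) solution of $$x_{n+10}=\frac{x_n}{-1+B\,x_nx_{n+2}x_{n+4}x_{n+6}x_{n+8}},\qquad n\ge 0,$$ with initial conditions $x_0,\dots,x_9$. Then the solution is periodic with period $20$, i.e. $x_{n+20}=x_n$ for all $n\ge 0$; explicitly, for $k\in\{0,\dots,9\}$ and $P_k=x_{\tau(k)}x_{\tau(k)+2}x_{\tau(k)+4}x_{\tau(k)+6}x_{\tau(k)+8}$, one has $x_{10+k}=x_k/(-1+BP_k)$ if $\lfloor k/2\rfloor$ is even and $x_{10+k}=x_k(-1+BP_k)$ if $\lfloor k/2\rfloor$ is odd.
   Context: $\tau(k)\in\{0,1\}$ is the remainder of $k$ upon division by $2$, and $\lfloor\cdot\rfloor$ is the floor function. *)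

(* Defs.v *)
From Stdlib Require Export Reals Arith.
Open Scope R_scope.

Definition tau (k : nat) : nat := Nat.modulo k 2.

Definition P5 (x : nat -> R) (n : nat) : R :=
  x n * x (n + 2)%nat * x (n + 4)%nat * x (n + 6)%nat * x (n + 8)%nat.

Definition is_solution (B : R) (x : nat -> R) : Prop :=
  forall n : nat, -1 + B * P5 x n <> 0 /\
    x (n + 10)%nat = x n / (-1 + B * P5 x n).

(* Main.v *)
Require Import Defs.
From Stdlib Require Import Reals Arith Lia Lra.
Open Scope R_scope.

Section S.
Variables (B : R) (x : nat -> R) (hx : is_solution B x).
Let D n := -1 + B * P5 x n.

Lemma Dnz n : D n <> 0.
Proof. exact (proj1 (hx n)). Qed.

Lemma D2 n : D (n + 2)%nat * D n = 1.
Proof.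
  pose proof (Dnz n) as Hn. unfold D in *.
  assert (HP : P5 x (n + 2) = P5 x n / (-1 + B * P5 x n)).
  { unfold P5.
    replace (n + 2 + 2)%nat with (n + 4)%nat by lia.
    replace (n + 2 + 4)%nat with (n + 6)%nat by lia.
    replace (n + 2 + 6)%nat with (n + 8)%nat by lia.
    replace (n + 2 + 8)%nat with (n + 10)%nat by lia.
    rewrite (proj2 (hx n)). unfold P5 in Hn |- *. field. exact Hn. }
  rewrite HP. field. exact Hn.
Qed.

Lemma D4 n : D (n + 4)%nat = D n.
Proof.
  pose proof (D2 n). pose proof (D2 (n+2)). replace (n + 2 + 2)%nat with (n+4)%nat in H0 by lia.
  pose proof (Dnz (n+2)).
  apply Rmult_eq_reg_l with (D (n+2)%nat); auto. lra.
Qed.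

End S.

Lemma inv_aux a b c : a * b = 1 -> c / a = c * b.
Proof.
  intro E. assert (a <> 0) as Ha by (intro Z; rewrite Z in E; lra).
  assert (b = / a) as Hb.
  { apply Rmult_eq_reg_l with a; [rewrite Rinv_r by exact Ha; lra | exact Ha]. }
  rewrite Hb. reflexivity.
Qed.

Theorem theorem1 (B : R) (x : nat -> R) (hB : B <> 0) (hx : is_solution B x) :
  (forall n : nat, x (n + 20)%nat = x n) /\
  (forall k : nat, (k < 10)%nat ->
     let Pk := P5 x (tau k) in
     if Nat.even (Nat.div k 2)
     then x (10 + k)%nat = x k / (-1 + B * Pk)
     else x (10 + k)%nat = x k * (-1 + B * Pk)).
Proof.
  split.
  - intro n.
    replace (n + 20)%nat with (n + 10 + 10)%nat by lia.
    rewrite (proj2 (hx (n+10)%nat)), (proj2 (hx n)).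
    pose proof (D4 B x hx n) as A1. pose proof (D4 B x hx (n+4)) as A2.
    pose proof (D2 B x hx (n+8)) as A3.
    replace (n+4+4)%nat with (n+8)%nat in A2 by lia.
    replace (n+8+2)%nat with (n+10)%nat in A3 by lia.
    pose proof (Dnz B x hx n) as N1. pose proof (Dnz B x hx (n+10)) as N2.
    simpl in *. rewrite A2, A1 in A3.
    set (a := -1 + B * P5 x n) in *. set (b := -1 + B * P5 x (n + 10)) in *.
    replace (x n / a / b) with (x n / (b * a)) by (field; auto).
    rewrite A3. field.
  - intros k Hk.
    pose proof (fun n => proj2 (hx n)) as Rc.
    pose proof (D2 B x hx) as E2. pose proof (D4 B x hx) as E4.
    pose proof (Dnz B x hx) as NZ.
    cbv zeta. rewrite (Nat.add_comm 10 k), Rc.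
    destruct k as [|[|[|[|[|[|[|[|[|[|k]]]]]]]]]]; [..| lia];
      cbv [tau Nat.modulo Nat.sub Nat.even Nat.div Nat.divmod fst snd].
    + reflexivity.
    + reflexivity.
    + apply inv_aux; exact (E2 0%nat).
    + apply inv_aux; exact (E2 1%nat).
    + pose proof (E4 0%nat) as H; simpl in H; rewrite H; reflexivity.
    + pose proof (E4 1%nat) as H; simpl in H; rewrite H; reflexivity.
    + pose proof (E2 4%nat) as H; pose proof (E4 0%nat) as H'; simpl in H, H'; rewrite H' in H; apply inv_aux; exact H.
    + pose proof (E2 5%nat) as H; pose proof (E4 1%nat) as H'; simpl in H, H'; rewrite H' in H; apply inv_aux; exact H.
    + pose proof (E4 4%nat) as H; pose proof (E4 0%nat) as H'; simpl in H, H'; rewrite H, H'; reflexivity.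
    + pose proof (E4 5%nat) as H; pose proof (E4 1%nat) as H'; simpl in H, H'; rewrite H, H'; reflexivity.
Qed.
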